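(* Suppose Assumptions A1, A2 and A3 (described in the context) hold, let $\overline{F}\in\mathbb{R}^m$, and consider Algorithm PDFPM (described in the context) while $F(x^k)>\overline{F}$ (componentwise) and $\sigma_k\|\bar{x}^k-x^k\|\ge\epsilon$. Then the algorithm uses at most $$\max_{j\in\mathcal{J}}\{F_j(x^0)-\overline{F}_j\}\,\frac{2c}{\alpha}\,\epsilon^{-\frac{\beta+1}{\beta}}+\log_2\Big(\frac{\sigma_{\max}}{\sigma_{\min}}\Big)$$ evaluations of the $F_j$ and their subdifferentials, where $\beta=\min\{\beta_j:j\in\mathcal{J}\}$, $c=2\max_{j\in\mathcal{J}}\Big[\frac{2L_j+\overline{B}}{1-\alpha}+\frac{2n^{\frac{1-\beta_j}{2}}M_j+2M_j}{(\beta_j+1)(1-\alpha)}\Big]^{\frac1{\beta_j}}$, $\sigma_{\max}=2\epsilon^{\frac{\beta-1}{\beta}}\max_{j\in\mathcal{J}}\Big[\frac{2L_j+\overline{B}}{1-\alpha}+\frac{2n^{\frac{1-\beta_j}{2}}M_j+2M_j}{(\beta_j+1)(1-\alpha)}\Big]^{\frac1{\beta_j}}$, and $\sigma_{\min}=\sigma_0$.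
   Context: Setting: $m,n\ge1$, $\mathcal{J}=\{1,\dots,m\}$, $F=(F_1,\dots,F_m)$ with $F_j=f_j+h_j$, where $f_j:\mathbb{R}^n\to\mathbb{R}$ is differentiable and $h_j:\mathbb{R}^n\to\mathbb{R}\cup\{+\infty\}$ is convex. For each $j$ a map $g_{f_j}:\mathbb{R}^n\times[0,1]\to\mathbb{R}^n$ is given with $\lim_{\lambda\to0}g_{f_j}(x,\lambda)=\nabla f_j(x)$. $\|\cdot\|$ is the Euclidean norm (spectral norm for matrices). For $u,v\in\mathbb{R}^m$, $u>v$ means $u_j>v_j$ for all $j$. Algorithm PDFPM: choose $x^0\in\mathbb{R}^n$, $\alpha,\epsilon\in(0,1)$, $\sigma_0\ge1$, symmetric positive semidefinite $B_j^0\in\mathbb{R}^{n\times n}$; set $k=0$. Step 1: choose $0<\lambda_k\le \epsilon/(\sigma_k\sqrt n)$ and compute $g_{f_j}(x^k,\lambda_k)$ for each $j$. Step 2: let $\bar{x}^k$ be the (unique) minimizer of $\Phi_{x^k}(x)+\frac{\sigma_k}{2}\|x-x^k\|^2$, where $\Phi_{x^k}(x)=\max_{j\in\mathcal{J}}[\langle g_{f_j}(x^k,\lambda_k)+\frac12B_j^k(x-x^k),x-x^k\rangle+h_j(x)-h_j(x^k)]$. Step 3: if $\sigma_k\|\bar{x}^k-x^k\|\ge\epsilon$ go to Step 4; otherwise stop. Step 4: if $F_j(\bar{x}^k)\le F_j(x^k)-\frac{\alpha\epsilon^2}{2\sigma_k}$ for all $j\in\mathcal{J}$, set $x^{k+1}=\bar{x}^k$,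 $\sigma_{k+1}=\sigma_k$, choose symmetric positive semidefinite $B_j^{k+1}$, set $k\leftarrow k+1$ and go to Step 1; otherwise replace $\sigma_k$ by $2\sigma_k$ and go to Step 1 (same $k$). Assumption A1: there is $\overline{B}\ge0$ with $\|B_j^k\|\le\overline{B}$ for all iterations $k$ and all $j\in\mathcal{J}$. Assumption A2: for each $j$ there are $L_j,M_j>0$ and $\beta_j\in(0,1]$ with $f_j(y)\le f_j(x)+\langle\nabla f_j(x),y-x\rangle+\frac{L_j}{2}\|y-x\|^2+\frac{M_j}{\beta_j+1}\|y-x\|^{\beta_j+1}$ for all $x,y\in\mathbb{R}^n$. Assumption A3: with the same $L_j,M_j,\beta_j$, $\|\nabla f_j(x)-g_{f_j}(x,\lambda)\|\le\lambda\frac{\sqrt n L_j}{2}+\sqrt n\frac{M_j}{\beta_j+1}\lambda^{\beta_j}$ for all $x$ and all $\lambda\in(0,1]$.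
   Formalization: σ₀ ≤ σ_max and $h_j(x^0)<+\infty$ for all j are also assumed, and the bound is on the number of passes through Steps 1–4 preceding any pass up to which $F(x^k)>\overline{F}$ and before which Step 3 never stops. Apart from conventions, each condition added here is assumed in the paper as well or is needed for the statement above to hold. *)

(* Defs.v *)
From HB Require Import structures.
From mathcomp Require Import all_boot all_order all_algebra.
From mathcomp Require Import all_classical all_reals all_analysis.
Set Implicit Arguments. Unset Strict Implicit. Unset Printing Implicit Defensive.
Import Order.TTheory GRing.Theory Num.Theory.
Import numFieldNormedType.Exports.
Local Open Scope ring_scope.

Section Defs.
Variables (R : realType) (n : nat).
Notation vec := 'cV[R]_n.

Definition dotp (u v : vec) : R := \sum_(i < n) u i 0 * v i 0.
Definition enorm (u : vec) : R := Num.sqrt (dotp u u).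

(** ||B|| <= b for the spectral (operator 2-) norm, written out. *)
Definition spec_norm_le (B : 'M[R]_n) (b : R) : Prop :=
  forall v : vec, enorm (B *m v) <= b * enorm v.

Definition sym_psd (B : 'M[R]_n) : Prop :=
  B^T = B /\ forall v : vec, 0 <= dotp v (B *m v).

Definition is_gradient (f : vec -> R) (gr : vec -> vec) : Prop :=
  forall x : vec, differentiable f x /\ forall h : vec, 'd f x h = dotp (gr x) h.

Definition convex_ext (h : vec -> \bar R) : Prop :=
  forall (x y : vec) (t : R), 0 < t < 1 ->
    (h (t *: x + (1 - t) *: y)%R <= t%:E * h x + (1 - t)%:E * h y)%E.
End Defs.

Definition log2 {R : realType} (x : R) : R := ln x / ln 2.

Section PDFPM.
Local Open Scope ereal_scope.
Variables (R : realType) (m n : nat).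
Notation vec := 'cV[R]_n.

Definition Fobj (f : 'I_m -> vec -> R) (h : 'I_m -> vec -> \bar R)
  (j : 'I_m) (x : vec) : \bar R := (f j x)%:E + h j x.

Definition Phi (h : 'I_m -> vec -> \bar R) (gk : 'I_m -> vec)
  (Bk : 'I_m -> 'M[R]_n) (xk x : vec) : \bar R :=
  \big[maxe/-oo]_(j < m)
     ((dotp (gk j + 2^-1 *: (Bk j *m (x - xk)))%R (x - xk)%R)%:E
      + (h j x - h j xk)).
End PDFPM.

(* Main.v *)
Require Import Defs.
From HB Require Import structures.
From mathcomp Require Import all_boot all_order all_algebra.
From mathcomp Require Import all_classical all_reals all_analysis.
From mathcomp Require Import lra ring.
Import Order.TTheory GRing.Theory Num.Theory.
Import numFieldNormedType.Exports.
Local Open Scope classical_set_scope.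
Local Open Scope ring_scope.
Section LinAlg.
Variables (R : realType) (n : nat).
Implicit Types u v w : 'cV[R]_n.

Lemma dotpC u v : dotp u v = dotp v u.
Proof. by apply: eq_bigr => i _; rewrite mulrC. Qed.

Lemma dotpDl u v w : dotp (u + v) w = dotp u w + dotp v w.
Proof. by rewrite /dotp -big_split; apply: eq_bigr => i _; rewrite mxE mulrDl. Qed.

Lemma dotpZl (a : R) u w : dotp (a *: u) w = a * dotp u w.
Proof. by rewrite /dotp mulr_sumr; apply: eq_bigr => i _; rewrite mxE mulrA. Qed.

Lemma dotpNl u w : dotp (- u) w = - dotp u w.
Proof. by rewrite -scaleN1r dotpZl mulN1r. Qed.

Lemma dotpBl u v w : dotp (u - v) w = dotp u w - dotp v w.
Proof. by rewrite dotpDl dotpNl. Qed.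

Lemma dotpDr u v w : dotp w (u + v) = dotp w u + dotp w v.
Proof. by rewrite dotpC dotpDl !(dotpC w). Qed.

Lemma dotpBr u v w : dotp w (u - v) = dotp w u - dotp w v.
Proof. by rewrite dotpC dotpBl !(dotpC w). Qed.

Lemma dotpZr (a : R) u w : dotp w (a *: u) = a * dotp w u.
Proof. by rewrite dotpC dotpZl dotpC. Qed.

Lemma dotp0r u : dotp u 0 = 0.
Proof. by rewrite /dotp big1 // => i _; rewrite mxE mulr0. Qed.

Lemma dotpp_ge0 u : 0 <= dotp u u.
Proof. by apply: sumr_ge0 => i _; rewrite -expr2 sqr_ge0. Qed.

Lemma enorm_ge0 u : 0 <= enorm u.
Proof. exact: sqrtr_ge0. Qed.

Lemma enorm_sq u : enorm u ^+ 2 = dotp u u.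
Proof. by rewrite sqr_sqrtr // dotpp_ge0. Qed.

Lemma enorm0 : enorm (0 : 'cV[R]_n) = 0.
Proof. by rewrite /enorm dotp0r sqrtr0. Qed.

Lemma enorm_eq0 u : enorm u = 0 -> u = 0.
Proof.
move=> H; have H2 : dotp u u = 0 by rewrite -enorm_sq H expr2 mulr0.
apply/matrixP => i j; rewrite (ord1 j) mxE.
have hp : forall k : 'I_n, predT k -> 0 <= u k 0 * u k 0 by move=> k _; rewrite -expr2 sqr_ge0.
have := @psumr_eq0P _ _ predT (fun k => u k 0 * u k 0) hp H2 i isT.
by move=> /eqP; rewrite mulf_eq0 orbb => /eqP.
Qed.

Lemma cauchy_schwarz u v : dotp u v <= enorm u * enorm v.
Proof.
have [a0|an0] := eqVneq (enorm u) 0.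
  by rewrite (enorm_eq0 _ a0) dotpC dotp0r enorm0 mul0r.
have [b0|bn0] := eqVneq (enorm v) 0.
  by rewrite (enorm_eq0 _ b0) dotp0r enorm0 mulr0.
set a := enorm u; set b := enorm v.
have ha : 0 < a by rewrite lt_def an0 enorm_ge0.
have hb : 0 < b by rewrite lt_def bn0 enorm_ge0.
have := dotpp_ge0 (b *: u - a *: v).
rewrite !(dotpBl, dotpBr, dotpZl, dotpZr) -!enorm_sq -/a -/b (dotpC v u).
move=> H; have hab : 0 < a * b by rewrite mulr_gt0.
nra.
Qed.
End LinAlg.
Section RealKey.
Variable R : realType.

Lemma powE (x a : R) : 0 < x -> x `^ a = expR (a * ln x).
Proof. by move=> hx; rewrite /powR gt_eqF. Qed.

Lemma expRln (x : R) : 0 < x -> expR (ln x) = x.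
Proof. by move=> hx; rewrite lnK // posrE. Qed.

Lemma lnMp (x y : R) : 0 < x -> 0 < y -> ln (x * y) = ln x + ln y.
Proof. by move=> hx hy; rewrite lnM // posrE. Qed.

Lemma ler_lnp (x y : R) : 0 < x -> 0 < y -> x <= y -> ln x <= ln y.
Proof. by move=> hx hy hxy; rewrite ler_ln // posrE. Qed.

Lemma real_key (nr beta L M Bb alpha eps sig r lam E a q hb hx fb fx dg e : R) :
  1 <= nr -> 0 < beta <= 1 -> 0 < L -> 0 < M -> 0 <= Bb -> 0 < alpha < 1 ->
  0 < eps < 1 -> 1 <= sig -> 0 <= r -> eps <= sig * r -> 0 < lam ->
  lam <= eps / (sig * Num.sqrt nr) ->
  eps `^ ((beta - 1) / beta) *
    ((2 * L + Bb) / (1 - alpha)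
     + (2 * (nr `^ ((1 - beta) / 2)) * M + 2 * M) / ((beta + 1) * (1 - alpha)))
    `^ (1 / beta) <= sig ->
  fb <= fx + dg + L / 2 * r ^+ 2 + M / (beta + 1) * r `^ (beta + 1) ->
  dg = a + e -> e <= E * r ->
  E <= lam * (Num.sqrt nr * L / 2) + Num.sqrt nr * (M / (beta + 1)) * lam `^ beta ->
  0 <= q -> a + 2^-1 * q + (hb - hx) + sig / 2 * r ^+ 2 <= 0 ->
  fb + hb <= fx + hx - alpha * eps ^+ 2 / (2 * sig).
Proof.
move=> hnr /andP[hb0 hb1] hL hM hBb /andP[ha0 ha1] /andP[he0 he1] hsig hr0 hepsr
  hlam0 hlam hK hA2 hdg heE hE hq hPhi.
set s := Num.sqrt nr.
have hs1 : 1 <= s by rewrite /s -sqrtr1 ler_sqrt //; lra.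
have hs0 : 0 < s by lra.
have hsig0 : 0 < sig by lra.
have hr : 0 < r.
  have : 0 < sig * r by lra.
  by rewrite pmulr_rgt0.
have hls : lam * s <= r.
  move: hlam; rewrite ler_pdivlMr ?mulr_gt0 // -/s => h1.
  have h2 : lam * s * sig <= r * sig by rewrite mulrAC -mulrA; lra.
  by rewrite -(ler_pM2r hsig0).
set N := nr `^ ((1 - beta) / 2).
have hnr0 : 0 < nr by lra.
have hN0 : 0 < N by apply: powR_gt0.
have lns : ln nr = ln s + ln s.
  by rewrite -{1}(sqr_sqrtr (a:=nr)) ?(le_trans ler01) // lnXn ?mulr2n.
have hT2 : s * lam `^ beta <= N * r `^ beta.
  rewrite /N !powE // -{1}(expRln _ hs0) -!expRD ler_expR lns.
  have : ln lam + ln s <= ln r.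
    by rewrite -lnMp // ler_lnp // mulr_gt0.
  move=> h; have h2 : 0 <= beta * (ln r - (ln lam + ln s)) by apply: mulr_ge0; lra.
  lra.
set mb := M / (beta + 1).
have hmb : 0 < mb by rewrite /mb divr_gt0 //; lra.
set Pb := r `^ beta.
set LB := lam `^ beta.
rewrite -/s -/mb -/LB in hE.
have hPb : 0 < Pb by apply: powR_gt0.
have hLB : 0 < LB by apply: powR_gt0.
have hP : r `^ (beta + 1) = Pb * r.
  by rewrite /Pb !powE // mulrDl mul1r expRD expRln.
have S1 : e <= L / 2 * r ^+ 2 + mb * N * Pb * r.
  have h1 : E * r <= (lam * (s * L / 2) + s * mb * LB) * r.
    apply: ler_wpM2r; first lra. lra.
  have h2 : (lam * s) * (L / 2 * r) <= r * (L / 2 * r) by apply: ler_wpM2r => //; rewrite mulr_ge0 //; lra.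
  have h3 : (mb * r) * (s * LB) <= (mb * r) * (N * Pb) by apply: ler_wpM2l => //; rewrite mulr_ge0 //; lra.
  have E1 : (lam * (s * L / 2) + s * mb * LB) * r = (lam * s) * (L / 2 * r) + (mb * r) * (s * LB) by ring.
  have E2 : r * (L / 2 * r) = L / 2 * r ^+ 2 by ring.
  have E3 : (mb * r) * (N * Pb) = mb * N * Pb * r by ring.
  lra.
set Q := expR ((beta - 1) * ln r).
have hQ : Pb * r = r ^+ 2 * Q.
  rewrite /Pb /Q powE //.
  have -> : r ^+ 2 = expR (ln r + ln r) by rewrite expRD expRln // expr2.
  rewrite -expRD.
  have -> : expR (beta * ln r) * r = expR ((beta + 1) * ln r) by rewrite mulrDl mul1r expRD expRln.
  by congr expR; ring.
set w := expR ((1 - beta) * (ln sig - ln eps)).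
have hle : ln eps <= ln sig + ln r by rewrite -lnMp // ler_lnp // mulr_gt0.
have hQw : Q <= w.
  rewrite ler_expR.
  have : 0 <= (1 - beta) * (ln r - (ln eps - ln sig)) by apply: mulr_ge0; lra.
  lra.
have hlsig : 0 <= ln sig by apply: ln_ge0.
have hleps : ln eps < 0 by apply: ln_lt0; lra.
have hw1 : 1 <= w.
  apply: le_trans (expR_ge1Dx _).
  have : 0 <= (1 - beta) * (ln sig - ln eps) by apply: mulr_ge0; lra.
  lra.
set K := (2 * L + Bb) / (1 - alpha)
     + (2 * N * M + 2 * M) / ((beta + 1) * (1 - alpha)).
have hK0 : 0 < K.
  have h1a : 0 < 1 - alpha by lra.
  have k1 : 0 < (2 * L + Bb) / (1 - alpha) by apply: divr_gt0; lra.
  have k2 : 0 < (2 * N * M + 2 * M) / ((beta + 1) * (1 - alpha)).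
    apply: divr_gt0; last by apply: mulr_gt0; lra.
    have : 0 < N * M by apply: mulr_gt0.
    lra.
  rewrite /K; lra.
have hKw : K * w <= sig.
  move: hK; rewrite -/N -/K !powE // -expRD -{1}(expRln _ hsig0) ler_expR => hK.
  have hK2 : beta * ((1 / beta) * ln K + (beta - 1) / beta * ln eps) <= beta * ln sig.
    by apply: ler_wpM2l; lra.
  have E1 : beta * ((1 / beta) * ln K + (beta - 1) / beta * ln eps)
            = ln K + (beta - 1) * ln eps.
    by field; rewrite gt_eqF.
  rewrite E1 in hK2.
  rewrite -{1}(expRln _ hK0) -expRD -{2}(expRln _ hsig0) ler_expR.
  lra.
have hKid : K * (1 - alpha) / 2 = L + Bb / 2 + (N + 1) * mb.
  rewrite /K /mb; field.
  by rewrite !gt_eqF //; lra.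
have hB : L * r ^+ 2 + (N + 1) * mb * (r ^+ 2 * Q) <= (1 - alpha) / 2 * sig * r ^+ 2.
  have hr2 : 0 < r ^+ 2 by rewrite exprn_gt0.
  have h1 : (N + 1) * mb * Q <= (N + 1) * mb * w.
    by apply: ler_wpM2l => //; apply: mulr_ge0 => //; lra.
  have h2 : L + (N + 1) * mb * w <= (L + Bb / 2 + (N + 1) * mb) * w.
    have : 0 <= (L + Bb/2) * (w - 1) by apply: mulr_ge0; lra.
    lra.
  have h3 : K * w * ((1 - alpha) / 2) <= sig * ((1 - alpha) / 2).
    by apply: ler_wpM2r => //; lra.
  have h4 : (L + (N + 1) * mb * Q) * r ^+ 2 <= ((1 - alpha) / 2 * sig) * r ^+ 2.
    apply: ler_wpM2r; first exact: ltW.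
    have E4 : K * w * ((1 - alpha) / 2) = (L + Bb / 2 + (N + 1) * mb) * w.
      by rewrite -hKid; ring.
    lra.
  have E5 : (L + (N + 1) * mb * Q) * r ^+ 2 = L * r ^+ 2 + (N + 1) * mb * (r ^+ 2 * Q) by ring.
  lra.
have hC : alpha * eps ^+ 2 / (2 * sig) <= alpha * sig * r ^+ 2 / 2.
  have h2s : 0 < 2 * sig by lra.
  rewrite ler_pdivrMr //.
  have : eps ^+ 2 <= (sig * r) ^+ 2 by rewrite lerXn2r // ?nnegrE; lra.
  move=> h; have : alpha * eps ^+ 2 <= alpha * (sig * r) ^+ 2 by apply: ler_wpM2l => //; lra.
  move=> h'.
  have E6 : alpha * sig * r ^+ 2 / 2 * (2 * sig) = alpha * (sig * r) ^+ 2.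
    by field.
  lra.
have hA2' : fb <= fx + a + e + L / 2 * r ^+ 2 + mb * (Pb * r).
  move: hA2; rewrite hP hdg -/mb; lra.
rewrite hQ in hA2'.
have E7 : mb * N * Pb * r = N * mb * (r ^+ 2 * Q) by rewrite -hQ; ring.
rewrite E7 in S1.
have hq2 : 0 <= 2^-1 * q by rewrite mulr_ge0 // invr_ge0; lra.
have E8 : (1 - alpha) / 2 * sig * r ^+ 2 = sig / 2 * r ^+ 2 - alpha * sig * r ^+ 2 / 2 by ring.
have E9 : (N + 1) * mb * (r ^+ 2 * Q) = N * mb * (r ^+ 2 * Q) + mb * (r ^+ 2 * Q) by ring.
lra.
Qed.
End RealKey.
Section Aux.
Variable R : realType.

Lemma exp_cmp (bj bm le : R) : 0 < bm -> bm <= bj -> le < 0 ->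
  (bj - 1) / bj * le <= (bm - 1) / bm * le.
Proof.
move=> hbm hle hl.
have hbj : 0 < bj by apply: lt_le_trans hle.
have E1 : (bj - 1) / bj - (bm - 1) / bm = (bj - bm) / (bj * bm).
  by field; rewrite !gt_eqF.
have h0 : 0 <= (bj - bm) / (bj * bm).
  by apply: divr_ge0; [rewrite subr_ge0 | rewrite mulr_ge0 // ltW].
rewrite -E1 in h0.
have : 0 <= ((bj - 1) / bj - (bm - 1) / bm) * (- le) by apply: mulr_ge0 => //; lra.
lra.
Qed.

Lemma step_succ (k A F0 Fx Fb lg d : R) : 0 <= A -> 1 <= A * d -> Fb <= Fx - d ->
  k <= A * (F0 - Fx) + lg -> k + 1 <= A * (F0 - Fb) + lg.
Proof.
move=> hA hAd hb hk.
have : A * (F0 - Fx + d) <= A * (F0 - Fb) by apply: ler_wpM2l => //; lra.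
rewrite mulrDr; lra.
Qed.

Lemma step_fail (k A F lg : R) : k <= A * F + lg -> k + 1 <= A * F + (lg + 1).
Proof. lra. Qed.

Lemma final_lem (t A F0 Ft Fbar D lg lgM : R) : 0 <= A -> t <= A * (F0 - Ft) + lg ->
  Fbar < Ft -> F0 - Fbar <= D -> lg <= lgM -> t <= A * D + lgM.
Proof.
move=> hA ht hF hD hl.
have : A * (F0 - Ft) <= A * D by apply: ler_wpM2l => //; lra.
lra.
Qed.

Lemma Ad_ge1 (sM s al e : R) : 0 < s -> s <= sM -> 0 < al -> 0 < e ->
  1 <= 2 * sM / (al * e ^+ 2) * (al * e ^+ 2 / (2 * s)).
Proof.
move=> hs hsM ha he.
have -> : 2 * sM / (al * e ^+ 2) * (al * e ^+ 2 / (2 * s)) = sM / s.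
  by field; rewrite !gt_eqF // ?exprn_gt0.
by rewrite ler_pdivlMr // mul1r.
Qed.

Lemma log2_1 : log2 (1 : R) = 0.
Proof. by rewrite /log2 ln1 mul0r. Qed.

Lemma ln2_pos : 0 < ln (2 : R).
Proof. by apply: ln_gt0; rewrite ltr1n. Qed.

Lemma log2_double (a b : R) : 0 < a -> 0 < b -> log2 (2 * a / b) = log2 (a / b) + 1.
Proof.
move=> ha hb; rewrite /log2 -mulrA lnMp // ?divr_gt0 //.
by rewrite mulrDl divff ?[1 + _]addrC // gt_eqF // ln2_pos.
Qed.

Lemma log2_le (x y : R) : 0 < x -> x <= y -> log2 x <= log2 y.
Proof.
move=> hx hxy; rewrite /log2 ler_pM2r ?invr_gt0 ?ln2_pos //.
by apply: ler_lnp => //; apply: lt_le_trans hxy.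
Qed.

Lemma pow_split (e b : R) : 0 < e -> 0 < b ->
  e `^ ((b - 1) / b) = e `^ (- (b + 1) / b) * e ^+ 2.
Proof.
move=> he hb; rewrite !powE //.
rewrite -[X in _ * X ^+ 2](expRln _ _ he) expr2 -!expRD; congr expR.
by field; rewrite gt_eqF.
Qed.
End Aux.
Theorem theorem4
  (R : realType) (m n : nat) (hm : (0 < m)%N) (hn : (0 < n)%N)
  (f : 'I_m -> 'cV[R]_n -> R) (gradf : 'I_m -> 'cV[R]_n -> 'cV[R]_n)
  (h : 'I_m -> 'cV[R]_n -> \bar R)
  (g : 'I_m -> 'cV[R]_n -> R -> 'cV[R]_n)
  (Hgrad : forall j, is_gradient (f j) (gradf j))
  (Hconv : forall j, convex_ext (h j))
  (Hglim : forall j x, (g j x) @ 0^'+ --> gradf j x)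
  (* parameters *)
  (L M beta : 'I_m -> R) (Bbar : R)
  (HL : forall j, 0 < L j) (HM : forall j, 0 < M j)
  (Hbeta : forall j, 0 < beta j <= 1) (HBbar : 0 <= Bbar)
  (* Assumption A2 *)
  (HA2 : forall j x y, f j y <= f j x + dotp (gradf j x) (y - x)
           + L j / 2 * enorm (y - x) ^+ 2
           + M j / (beta j + 1) * enorm (y - x) `^ (beta j + 1))
  (* Assumption A3 *)
  (HA3 : forall j x lam, 0 < lam <= 1 ->
           enorm (gradf j x - g j x lam)
             <= lam * (Num.sqrt n%:R * L j / 2)
                + Num.sqrt n%:R * (M j / (beta j + 1)) * lam `^ beta j)
  (Fbar : 'I_m -> R)
  (* algorithm data *)
  (x0 : 'cV[R]_n) (alpha eps sigma0 : R)
  (Halpha : 0 < alpha < 1) (Heps : 0 < eps < 1) (Hsigma0 : 1 <= sigma0)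
  (Hx0 : forall j, h j x0 \is a fin_num)
  (* a run of PDFPM, indexed by trials t (passes through Steps 1-4):
     xs t = current iterate x^k, sig t = current sigma_k, lam t = lambda,
     B t = current matrices B^k_j, xb t = bar x computed in Step 2 *)
  (xs : nat -> 'cV[R]_n) (sig lam : nat -> R)
  (B : nat -> 'I_m -> 'M[R]_n) (xb : nat -> 'cV[R]_n)
  (Hxs0 : xs 0%N = x0) (Hsig0 : sig 0%N = sigma0)
  (HBpsd : forall t j, sym_psd (B t j))
  (HA1 : forall t j, spec_norm_le (B t j) Bbar)
  (Hlam : forall t, 0 < lam t <= eps / (sig t * Num.sqrt n%:R))
  (Hxb : forall t y,
     (Phi h (fun j => g j (xs t) (lam t)) (B t) (xs t) (xb t)
        + (sig t / 2 * enorm (xb t - xs t) ^+ 2)%:E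
      <= Phi h (fun j => g j (xs t) (lam t)) (B t) (xs t) y
        + (sig t / 2 * enorm (y - xs t) ^+ 2)%:E)%E)
  (Hstep : forall t, eps <= sig t * enorm (xb t - xs t) ->
     let dec := forall j, (Fobj f h j (xb t)
                   <= Fobj f h j (xs t) - (alpha * eps ^+ 2 / (2 * sig t))%:E)%E in
     (dec -> xs t.+1 = xb t /\ sig t.+1 = sig t) /\
     (~ dec -> xs t.+1 = xs t /\ sig t.+1 = 2 * sig t /\ B t.+1 = B t))
  : let betamin := \big[Num.min/1]_(j < m) beta j in
    let K j := (2 * L j + Bbar) / (1 - alpha)
               + (2 * (n%:R `^ ((1 - beta j) / 2)) * M j + 2 * M j)
                 / ((beta j + 1) * (1 - alpha)) in
    let Kmax := \big[Num.max/0]_(j < m) (K j `^ (1 / beta j)) in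
    let c := 2 * Kmax in
    let sigma_max := 2 * eps `^ ((betamin - 1) / betamin) * Kmax in
    let sigma_min := sigma0 in
    let Dmax := \big[Num.max/0]_(j < m) (fine (Fobj f h j x0) - Fbar j) in
    sigma_min <= sigma_max ->
    forall t : nat,
      (forall s, (s < t)%N -> eps <= sig s * enorm (xb s - xs s)) ->
      (forall s, (s <= t)%N -> forall j, ((Fbar j)%:E < Fobj f h j (xs s))%E) ->
      t%:R <= Dmax * (2 * c / alpha) * eps `^ (- (betamin + 1) / betamin)
              + log2 (sigma_max / sigma_min).
Proof.
move=> betamin K Kmax c sigma_max sigma_min Dmax hsm t Hsteps HF.
have [ha0 ha1] := andP Halpha.
have [he0 he1] := andP Heps.
have hbm0 : 0 < betamin.
  by apply: lt_bigmin => // j _; case/andP: (Hbeta j).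
have hbmle : forall j, betamin <= beta j by move=> j; exact: bigmin_le.
have hKj : forall j, K j `^ (1 / beta j) <= Kmax.
  by move=> j; exact: (le_bigmax _ (fun j => K j `^ (1 / beta j)) j).
set T := eps `^ ((betamin - 1) / betamin) * Kmax.
have hsmT : sigma_max = 2 * T by rewrite /sigma_max /T mulrA.
have key : forall s, eps <= sig s * enorm (xb s - xs s) -> 1 <= sig s ->
   (forall j, h j (xs s) \is a fin_num) -> T <= sig s ->
   forall j, (Fobj f h j (xb s) <= Fobj f h j (xs s)
                 - (alpha * eps ^+ 2 / (2 * sig s))%:E)%E.
  move=> s hes hs1 hfin hT j.
  have hPhi0 : (Phi h (fun j => g j (xs s) (lam s)) (B s) (xs s) (xs s) <= 0)%E.
    rewrite /Phi; apply: bigmax_le; first exact: leNye.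
    by move=> i _; rewrite subrr dotp0r subee // adde0.
  have hj : ((dotp (g j (xs s) (lam s) + 2^-1 *: (B s j *m (xb s - xs s))) (xb s - xs s))%:E
        + (h j (xb s) - h j (xs s)) + (sig s / 2 * enorm (xb s - xs s) ^+ 2)%:E <= 0)%E.
    apply: (le_trans (leeD2r _ (le_bigmax _ (fun j => ((dotp (g j (xs s) (lam s) + 2^-1 *: (B s j *m (xb s - xs s))) (xb s - xs s))%:E
        + (h j (xb s) - h j (xs s)))%E) j))).
    apply: (le_trans (Hxb s (xs s))).
    by rewrite subrr enorm0 expr2 !mulr0 adde0.
  set hxr := fine (h j (xs s)).
  have hxE : h j (xs s) = hxr%:E by rewrite fineK.
  move: hj; rewrite /Fobj hxE.
  case hbE : (h j (xb s)) => [hbr | |]; last first.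
  - by move=> _; rewrite /= leNye.
  - by rewrite /= leye_eq.
  move=> hj; rewrite -EFinB -!EFinD lee_fin in hj.
  rewrite -!EFinD lee_fin.
  rewrite dotpDl dotpZl in hj.
  have [hl0 hl1] := andP (Hlam s).
  have hsn1 : 1 <= Num.sqrt (n%:R : R) by rewrite -{1}sqrtr1 ler_sqrt // ler1n.
  have hlam1 : lam s <= 1.
    apply: le_trans hl1 _.
    have h1s : 1 <= sig s * Num.sqrt (n%:R : R).
      by have := ler_pM ler01 ler01 hs1 hsn1; rewrite mulr1.
    rewrite ler_pdivrMr ?mul1r; last exact: lt_le_trans ltr01 h1s.
    exact: le_trans (ltW he1) h1s.
  have hKb : eps `^ ((beta j - 1) / beta j) * K j `^ (1 / beta j) <= sig s.
    apply: le_trans hT; rewrite /T.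
    apply: ler_pM; try exact: powR_ge0; last exact: hKj.
    rewrite !powE // ler_expR; apply: exp_cmp => //.
    by apply: ln_lt0; rewrite he0 he1.
  have hq : 0 <= dotp (B s j *m (xb s - xs s)) (xb s - xs s).
    by rewrite dotpC; exact: (HBpsd s j).2.
  have hlam01 : 0 < lam s <= 1 by rewrite hl0 hlam1.
  set d := xb s - xs s.
  have hn1 : 1 <= (n%:R : R) by rewrite ler1n.
  have hdg : dotp (gradf j (xs s)) d = dotp (g j (xs s) (lam s)) d
       + dotp (gradf j (xs s) - g j (xs s) (lam s)) d.
    by rewrite dotpBl addrC subrK.
  have := (@real_key R n%:R (beta j) (L j) (M j) Bbar alpha eps (sig s) (enorm d) (lam s)
    (enorm (gradf j (xs s) - g j (xs s) (lam s))) (dotp (g j (xs s) (lam s)) d)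
    (dotp (B s j *m d) d) hbr hxr (f j (xb s)) (f j (xs s)) (dotp (gradf j (xs s)) d)
    (dotp (gradf j (xs s) - g j (xs s) (lam s)) d)
    hn1 (Hbeta j) (HL j) (HM j) HBbar Halpha Heps hs1 (enorm_ge0 _ _ d) hes hl0 hl1 hKb
    (HA2 j (xs s) (xb s)) hdg (cauchy_schwarz _ _ _ _) (HA3 j (xs s) (lam s) hlam01) hq).
  by move/(_ hj).
pose j0 : 'I_m := Ordinal hm.
set A := 2 * sigma_max / (alpha * eps ^+ 2).
have hsig0pos : 0 < sigma0 := lt_le_trans ltr01 Hsigma0.
have hsmpos : 0 < sigma_max := lt_le_trans hsig0pos hsm.
have hA0 : 0 <= A.
  rewrite /A; apply: divr_ge0; first by apply: mulr_ge0 => //; exact: ltW.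
  by apply: mulr_ge0; [exact: ltW | exact: sqr_ge0].
have Inv : forall s, (s <= t)%N ->
   (forall j, Fobj f h j (xs s) \is a fin_num) /\ (sigma0 <= sig s /\ sig s <= sigma_max) /\
   s%:R <= A * (fine (Fobj f h j0 x0) - fine (Fobj f h j0 (xs s))) + log2 (sig s / sigma0).
  elim=> [_|s IH hst].
    rewrite Hxs0 Hsig0 subrr mulr0 add0r divff ?gt_eqF // log2_1.
    split; first by move=> j; rewrite /Fobj fin_numD Hx0.
    by split; [split; [exact: lexx | exact: hsm] | rewrite mulr0n].
  have [Hfin [[hs0 hsM] Hcnt]] := IH (ltnW hst).
  have hes := Hsteps s hst.
  have hs1 : 1 <= sig s := le_trans Hsigma0 hs0.
  have hspos : 0 < sig s := lt_le_trans ltr01 hs1.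
  have hhfin : forall j, h j (xs s) \is a fin_num.
    by move=> j; move: (Hfin j); rewrite /Fobj fin_numD => /andP[].
  have hFs1 := HF s.+1 hst.
  have [Hd Hnd] := Hstep s hes.
  case: (pselect (forall j, (Fobj f h j (xb s) <= Fobj f h j (xs s)
        - (alpha * eps ^+ 2 / (2 * sig s))%:E)%E)) => hdec.
  - have [Exs Esig] := Hd hdec.
    rewrite Exs Esig; rewrite Exs in hFs1.
    have Hfin' : forall j, Fobj f h j (xb s) \is a fin_num.
      move=> j; move: (hdec j) (hFs1 j); rewrite -(fineK (Hfin j)).
      by case: (Fobj f h j (xb s)).
    split => //; split; first by split.
    have hd0 := hdec j0.
    rewrite -(fineK (Hfin j0)) -(fineK (Hfin' j0)) -EFinB lee_fin in hd0.
    rewrite -natr1; apply: step_succ hA0 _ hd0 Hcnt.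
    exact: Ad_ge1.
  - have [Exs [Esig _]] := Hnd hdec.
    rewrite Exs Esig.
    have hT : sig s < T.
      rewrite ltNge; apply/negP => hT; apply: hdec; exact: key s hes hs1 hhfin hT.
    split => //; split.
      split.
        by apply: le_trans hs0 _; rewrite ler_pMl // ler1n.
      by rewrite hsmT ler_pM2l // ltW.
    rewrite log2_double // -natr1; exact: step_fail Hcnt.
have [Hfin [[ht0 htM] Hcnt]] := Inv t (leqnn t).
have hFt := HF t (leqnn t) j0.
rewrite -(fineK (Hfin j0)) lte_fin in hFt.
have hD : fine (Fobj f h j0 x0) - Fbar j0 <= Dmax.
  exact: (le_bigmax _ (fun j => fine (Fobj f h j x0) - Fbar j) j0).
have hlg : log2 (sig t / sigma0) <= log2 (sigma_max / sigma_min).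
  apply: log2_le; first by rewrite divr_gt0 // (lt_le_trans hsig0pos ht0).
  by rewrite ler_pM2r ?invr_gt0.
have hAD : A * Dmax = Dmax * (2 * c / alpha) * eps `^ (- (betamin + 1) / betamin).
  rewrite /A hsmT /T /c pow_split //.
  by field; rewrite !gt_eqF // ?exprn_gt0.
rewrite -hAD; exact: final_lem hA0 Hcnt hFt hD hlg.
Qed.
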